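(* For any $k,\Delta \in \mathbb{N}$, there exists an $L\in\mathbb{N}$ such that the following holds. If $G$ is a finite graph with $f(G) < k$ and maximum degree at most $\Delta$, then $G$ contains at most $L$ vertices of degree at least $k-1$.
   Context: All graphs are finite and simple. For a graph $G$, $f(G)$ denotes the largest integer $k$ for which $G$ contains an induced subgraph in which exactly $k$ distinct values occur among the vertex degrees (i.e., an induced subgraph with $k$ distinct degrees). *)

(* Defs.v *)
From mathcomp Require Import all_boot.
Set Implicit Arguments. Unset Strict Implicit. Unset Printing Implicit Defensive.

Definition simple_graph (T : finType) (e : rel T) : Prop :=
  symmetric e /\ irreflexive e.

Definition ideg (T : finType) (e : rel T) (S : {set T}) (v : T) : nat :=
  #|[set u in S | e v u]|.

Definition deg (T : finType) (e : rel T) (v : T) : nat := ideg e [set: T] v.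

Definition num_distinct_degrees (T : finType) (e : rel T) (S : {set T}) : nat :=
  size (undup [seq ideg e S v | v <- enum S]).

Definition f_distinct (T : finType) (e : rel T) : nat :=
  \max_(S : {set T}) num_distinct_degrees e S.

(* maximum degree of G (0 for the empty graph) *)
Definition max_deg (T : finType) (e : rel T) : nat :=
  \max_(v : T) deg e v.

(* Main.v *)
Require Import Defs.
From mathcomp Require Import all_boot.
From mathcomp Require Import zify.
Set Implicit Arguments. Unset Strict Implicit. Unset Printing Implicit Defensive.

Definition nbr (T : finType) (e : rel T) (v : T) : {set T} := [set u | e v u].
Definition ball2 (T : finType) (e : rel T) (v : T) : {set T} :=
  [set u | (u == v) || e v u || [exists w, e v w && e w u]].

Lemma card_nbr (T : finType) (e : rel T) v : #|nbr e v| = deg e v.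
Proof. rewrite /deg /ideg; apply: eq_card => u; by rewrite !inE. Qed.

Lemma card_bigcup_seq (T : finType) (I : Type) (r : seq I) (F : I -> {set T}) d :
  (forall i, #|F i| <= d) -> #|\bigcup_(i <- r) F i| <= size r * d.
Proof.
move=> Hd; elim: r => [|a r IH]; first by rewrite big_nil cards0.
rewrite big_cons /=.
apply: (leq_trans (leq_card_setU _ _).1).
rewrite mulSn; exact: leq_add.
Qed.

Lemma ball2_card (T : finType) (e : rel T) v d :
  (forall u, #|nbr e u| <= d) -> #|ball2 e v| <= 1 + (d + d * d).
Proof.
move=> Hd.
have sub : ball2 e v \subset
   v |: (nbr e v :|: \bigcup_(w in enum (nbr e v)) nbr e w).
  apply/subsetP => u; rewrite !inE => /orP[/orP[->|->]|/existsP[w /andP[evw ewu]]] //.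
  - by rewrite orbT.
  apply/orP; right; apply/orP; right; apply/bigcupP; exists w.
    by rewrite mem_enum inE.
  by rewrite inE.
apply: (leq_trans (subset_leq_card sub)).
rewrite cardsU1; apply: leq_add; first by case: (v \notin _).
apply: (leq_trans (leq_card_setU _ _).1).
apply: leq_add; first exact: Hd.
rewrite -bigcup_seq.
have H1 := @card_bigcup_seq _ _ (enum (nbr e v)) (nbr e) d Hd. apply: leq_trans H1 _.
rewrite -cardE; apply: leq_mul => //.
Qed.

Lemma ball2_sym (T : finType) (e : rel T) : symmetric e ->
  forall x y, (x \in ball2 e y) = (y \in ball2 e x).
Proof.
move=> sym x y; rewrite !inE eq_sym (sym y x); congr (_ || _).
apply/existsP/existsP => -[w /andP[h1 h2]]; exists w; by rewrite (sym x w) h2 (sym w y) h1 || rewrite (sym y w) h2 (sym w x) h1.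
Qed.

Lemma greedy (T : finType) (e : rel T) d : symmetric e ->
  (forall v, #|ball2 e v| <= d) ->
  forall m (H : {set T}), m * d < #|H| ->
  exists P : {set T}, [/\ P \subset H, #|P| = m.+1 &
     {in P &, forall x y, x != y -> x \notin ball2 e y}].
Proof.
move=> sym Hd; elim=> [|m IH] H HH.
  have /card_gt0P [v vH] : 0 < #|H| by lia.
  exists [set v]; split.
  - by rewrite sub1set.
  - by rewrite cards1.
  by move=> x y; rewrite !inE => /eqP -> /eqP ->; rewrite eqxx.
have /card_gt0P [v vH] : 0 < #|H| by lia.
set H' := H :\: ball2 e v.
have cH' : m * d < #|H'|.
  have := cardsD H (ball2 e v).
  have := subset_leq_card (subsetIr H (ball2 e v)).
  have := Hd v. rewrite /H'. lia.
have [P' [sP' cP' fP']] := IH H' cH'.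
have vP' : v \notin P'.
  apply/negP => /(subsetP sP'); by rewrite !inE eqxx.
exists (v |: P'); split.
- apply/subsetP => x; rewrite !inE => /orP[/eqP -> //|/(subsetP sP')].
  by rewrite !inE => /andP[].
- by rewrite cardsU1 vP' cP'.
move=> x y /setU1P[->|xP] /setU1P[->|yP];
  rewrite ?eqxx // => nxy.
- by rewrite ball2_sym //; have := subsetP sP' y yP; rewrite !inE => /andP[].
- by have := subsetP sP' x xP; rewrite !inE => /andP[].
exact: fP'.
Qed.

Lemma construct (T : finType) (e : rel T) (k : nat) (P : {set T}) :
  simple_graph e -> #|P| = k ->
  {in P &, forall x y, x != y -> x \notin ball2 e y} ->
  {in P, forall x, k.-1 <= deg e x} ->
  k <= f_distinct e.
Proof.
move=> [sym irr] cP far dP.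
case: k cP dP => [//|k'] cP dP.
set s := enum P.
pose A x := [set u in take (index x s) (enum (nbr e x))].
pose S := P :|: \bigcup_(x in P) A x.
have Hideg : {in P, forall x, ideg e S x = index x s}.
  move=> x xP; rewrite /ideg.
  have -> : [set u in S | e x u] = A x.
    apply/setP => u; rewrite !inE; apply/andP/idP.
    - move=> [/orP[uP|/bigcupP[y yP uy]] exu].
        case: (eqVneq u x) => [eux|nux]; first by rewrite eux irr in exu.
        have := far u x uP xP nux; by rewrite !inE exu orbT.
      move: uy; rewrite inE => uy.
      have eyu : e y u by have := mem_take uy; rewrite mem_enum inE.
      case: (eqVneq y x) uy => [-> //|nyx _].
      have := far y x yP xP nyx; rewrite !inE.
      case/norP => _ /existsPn /(_ u); by rewrite exu sym eyu.
    - move=> uA; split; last by have := mem_take uA; rewrite mem_enum inE.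
      apply/orP; right; apply/bigcupP; exists x => //; by rewrite inE.
  rewrite /A /= cardsE.
  have /card_uniqP -> : uniq (take (index x s) (enum (nbr e x))).
    by apply: take_uniq; apply: enum_uniq.
  rewrite size_takel // -cardE card_nbr.
  apply: leq_trans (dP x xP).
  have : index x s < size s by rewrite index_mem mem_enum.
  by rewrite -cardE cP.
have [x0 x0P] : exists x0, x0 \in P.
  by apply/card_gt0P; rewrite cP.
apply: leq_trans (leq_bigmax S).
rewrite /num_distinct_degrees.
have <- : size (iota 0 k'.+1) = k'.+1 by rewrite size_iota.
apply: uniq_leq_size; first exact: iota_uniq.
move=> i; rewrite mem_iota add0n => /andP[_ ik].
have isz : i < size s by rewrite -cardE cP.
have xs : nth x0 s i \in P by rewrite -mem_enum; apply: mem_nth.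
rewrite mem_undup; apply/mapP; exists (nth x0 s i).
  by rewrite mem_enum inE xs.
by rewrite Hideg // index_uniq // enum_uniq.
Qed.

Theorem proposition2p2 :
  forall k Delta : nat, exists L : nat,
    forall (T : finType) (e : rel T),
      simple_graph e ->
      f_distinct e < k ->
      max_deg e <= Delta ->
      #|[set v : T | k.-1 <= deg e v]| <= L.
Proof.
move=> k D; exists (k.-1 * (1 + (D + D * D))) => T e sg fk md.
have [sym irr] := sg.
have Hn : forall u, #|nbr e u| <= D.
  move=> u; rewrite card_nbr; apply: leq_trans md; exact: leq_bigmax.
rewrite leqNgt; apply/negP => Hlt.
case: k fk Hlt => [//|m] fk Hlt.
have [P [sP cP fP]] := greedy sym (fun v => ball2_card v Hn) Hlt.
have dP : {in P, forall x, m.+1.-1 <= deg e x}.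
  by move=> x /(subsetP sP); rewrite inE.
have := construct sg cP fP dP.
by rewrite leqNgt fk.
Qed.
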